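(* Let $p$ be an odd prime and let $(G,H,T)$ be the envelope of a right conjugacy closed loop of order $2p$. Let $K$ be a subgroup with $H\lneq K\lneq G$, $|G:K|=2$ and $|K:H|=p$. Let $L\le H$ with $L\trianglelefteq K$. Then for all $a\in G\setminus K$ we have $L\cap L^a=1$ and $LL^a=L\times L^a\trianglelefteq G$.
   Context: For a finite loop $\mathcal{L}$ with identity $e$: $G=\langle R_a\mid a\in\mathcal L\rangle$ with $R_a\colon x\mapsto xa$, $H$ the stabilizer of $e$ in $G$, $T=\{R_a\}$; $(G,H,T)$ is the envelope; the loop is right conjugacy closed if $T$ is a union of conjugacy classes of $G$. *)

(* Defs.v *)
From mathcomp Require Import all_boot all_fingroup.
Set Implicit Arguments. Unset Strict Implicit. Unset Printing Implicit Defensive.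
Import GroupScope.

Definition is_loop (T : finType) (op : T -> T -> T) (e : T) : Prop :=
  (forall x, op e x = x /\ op x e = x) /\
  (forall a, bijective (op a)) /\
  (forall a, bijective (fun x => op x a)).

Definition rtrans (T : finType) (op : T -> T -> T) : {set {perm T}} :=
  [set s : {perm T} | [exists a, [forall x, s x == op x a]]].

Definition env_G (T : finType) (op : T -> T -> T) : {group {perm T}} :=
  <<rtrans op>>%G.

Definition env_H (T : finType) (op : T -> T -> T) (e : T) : {group {perm T}} :=
  ('C_(env_G op)[e | 'P])%G.

Definition rcc (T : finType) (op : T -> T -> T) : Prop :=
  forall t, t \in rtrans op -> t ^: env_G op \subset rtrans op.

(* Main.v *)
Require Import Defs.
From mathcomp Require Import all_boot all_fingroup.
Import GroupScope.

Theorem lemma5p2 (p : nat) (T : finType) (op : T -> T -> T) (e : T)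
    (K L : {group {perm T}}) :
  prime p -> odd p ->
  is_loop op e -> rcc op -> #|T| = (2 * p)%N ->
  env_H op e \proper K -> K \proper env_G op ->
  #|env_G op : K| = 2%N -> #|K : env_H op e| = p ->
  L \subset env_H op e -> L <| K ->
  forall a, a \in env_G op :\: K ->
    L :&: L :^ a = 1 /\ L \x (L :^ a) = L * (L :^ a) /\ L * (L :^ a) <| env_G op.
Proof.
move=> _ _ lp _ _ _ pKG iGK _ sLH nLK0 a aGK.
have sKG := proper_sub pKG.
case: lp => eid [_ rbij].
set G := env_G op in sKG iGK aGK *.
have key : forall g, g \in G :\: K -> g * a^-1 \in K.
  by move=> g gGK; rewrite -mem_rcoset (rcoset_index2 sKG iGK aGK).
have /setDP [aG aK] := aGK.
have nKG := index2_normal sKG iGK.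
have Ka : K :^ a = K by apply: (normsP (normal_norm nKG)).
have nLK := normal_norm nLK0.
have sLK := normal_sub nLK0.
have nLaK : K \subset 'N(L :^ a).
  by have := nLK0; rewrite -(normalJ _ _ a) Ka => /normal_norm.
have sLaK : L :^ a \subset K by rewrite -Ka conjSg.
have LJ : forall x g, x \in L :&: L :^ a -> g \in G -> x ^ g^-1 \in L.
  move=> x g /setIP [xL xLa] gG.
  case gK: (g \in K); first by rewrite memJ_norm // groupV (subsetP nLK).
  have kK : g * a^-1 \in K by apply: key; rewrite inE gK gG.
  have -> : g^-1 = a^-1 * (g * a^-1)^-1 by rewrite invMg invgK mulgA mulVg mul1g.
  by rewrite conjgM memJ_norm ?groupV ?(subsetP nLK) // -mem_conjg.
have triv : L :&: L :^ a = 1.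
  apply/trivgP/subsetP => x xI; rewrite inE; apply/eqP/permP => y.
  have inj : injective (fun z => op z y) by apply: bij_inj.
  pose g := perm inj.
  have gG : g \in G.
    apply: mem_gen; rewrite inE; apply/existsP; exists y; apply/forallP => z.
    by rewrite permE.
  have ge : g e = y by rewrite permE (eid y).1.
  have := subsetP sLH _ (LJ x g xI gG) => /setIP [_ /astab1P].
  rewrite /= apermE conjgE invgK !permM => h.
  rewrite perm1 -ge; apply: (perm_inj (s := g^-1)); rewrite h -permM mulgV perm1 //.
have cL : L :^ a \subset 'C(L).
  apply/centsP => y yLa x xL; apply/commgP.
  have yK := subsetP sLaK _ yLa.
  have xK := subsetP sLK _ xL.
  suff: [~ y, x] \in L :&: L :^ a by rewrite triv => /set1gP ->.
  rewrite inE; apply/andP; split.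
    by rewrite commgEr groupM // memJ_norm ?groupV // (subsetP nLK).
  by rewrite /commg groupM ?groupV // memJ_norm // (subsetP nLaK).
split=> //; split; first exact: dprodE.
rewrite /normal mul_subG ?(subset_trans sLK sKG) ?(subset_trans sLaK sKG) //=.
apply/normsP => g gG; rewrite conjsMg.
case gK: (g \in K).
  by rewrite (normsP nLK g gK) (normsP nLaK g gK).
have gGK : g \in G :\: K by rewrite inE gK gG.
have kK := key g gGK.
have agK : a * g \in K.
  by rewrite -(invgK (a * g)) groupV invMg key // in_setD !groupV gK gG.
rewrite -conjsgM (normsP nLK _ agK).
have -> : g = (g * a^-1) * a by rewrite -mulgA mulVg mulg1.
by rewrite conjsgM (normsP nLK _ kK) (centC cL).
Qed.
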